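(* Let $G=(N,A)$ be an $s$-$t$ DAG and let $X$ be a sequence of nodes of $G$. The following statements are equivalent: (1) $X$ is safe for path covers of $G$. (2) There is a node $u\in N$ such that every $s$-$t$ path of $G$ containing $u$ contains $X$ (as a subsequence). (3) There is a node $v\in N$ such that $X$ is contained in the sequence obtained as the concatenation of the sequence of $s$-$v$ cutnodes with the sequence of $v$-$t$ cutnodes.
   Context: An $s$-$t$ DAG is a directed acyclic graph with a unique source $s$ and a unique sink $t$ such that every node is reachable from $s$ and every node reaches $t$. A sequence of nodes $X=u_1,\dots,u_\ell$ is a list of nodes such that there is a $u_i$-$u_{i+1}$ path for all $1\le i\le \ell-1$ (in particular a path is a sequence). $X$ is contained in (is a subsequence of) a sequence $Y$ if every node of $X$ occurs in $Y$. A path cover of $G$ is a set $P$ of $s$-$t$ paths such that every node of $G$ lies on some path of $P$. A sequence $X$ is safe (for path covers) if for every path cover $P$ of $G$, $X$ is a subsequence of some path of $P$; by convention, if no $s$-$t$ path contains $X$, then $X$ is unsafe. A node $w$ is a $u$-$v$ cutnode if every $u$-$v$ path contains $w$ (in particular $u$ and $v$ are $u$-$v$ cutnodes); the $u$-$v$ cutnodes appear in the same order on every $u$-$v$ path, giving the sequence of $u$-$v$ cutnodes. The concatenation of a sequence ending in $v$ with a sequence starting at $v$ lists the first sequence followed by the second with the repeated occurrence of $v$ removed. *)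

(* Defs.v *)
From mathcomp Require Import all_boot.
Set Implicit Arguments. Unset Strict Implicit. Unset Printing Implicit Defensive.

Section Defs.
Variables (T : finType) (e : rel T).

Definition is_path (u v : T) (l : seq T) : bool :=
  if l is x :: p then [&& x == u, path e x p & last x p == v] else false.

Definition acyclic : Prop := forall x p, ~ path e x (rcons p x).

Definition is_source (x : T) : Prop := forall y, ~~ e y x.
Definition is_sink (x : T) : Prop := forall y, ~~ e x y.

Definition st_DAG (s t : T) : Prop :=
  [/\ acyclic,
      is_source s /\ (forall x, is_source x -> x = s),
      is_sink t /\ (forall x, is_sink x -> x = t),
      (forall x, connect e s x) &
      (forall x, connect e x t)].

Definition is_sequence (X : seq T) : bool := sorted (connect e) X.

(* X is contained in (is a subsequence of) Y: every node of X occurs in Y. *)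
Definition contained (X Y : seq T) : Prop := {subset X <= Y}.

Definition path_cover (s t : T) (P : seq (seq T)) : Prop :=
  (forall l, l \in P -> is_path s t l) /\ (forall x, exists2 l, l \in P & x \in l).

(* Safety, with the convention that X is unsafe if no s-t path contains X. *)
Definition safe (s t : T) (X : seq T) : Prop :=
  (exists l, is_path s t l /\ contained X l) /\
  (forall P, path_cover s t P -> exists2 l, l \in P & contained X l).

Definition cutnode (u v w : T) : Prop := forall l, is_path u v l -> w \in l.

Definition cutnode_seq (u v : T) (C : seq T) : Prop :=
  exists2 l, is_path u v l &
    subseq C l /\ (forall w, w \in C <-> cutnode u v w).

(* concatenation of a sequence ending in v with one starting at v,
   with the repeated occurrence of v removed *)
Definition concat_seq (A B : seq T) : seq T := A ++ behead B.

End Defs.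

(* Main.v *)
Require Import Defs.
From Stdlib Require Import Classical ClassicalEpsilon.
From mathcomp Require Import all_boot.

Set Implicit Arguments. Unset Strict Implicit.
Section Aux.
Variables (T : finType) (e : rel T).

Lemma conn_path x y : connect e x y -> exists l, is_path e x y l.
Proof.
move/connectP=> [p hp ->]; exists (x :: p); rewrite /= eqxx hp eqxx //.
Qed.

Lemma path_head u v l : is_path e u v l -> u \in l.
Proof. by case: l => [|x p] //= /and3P [/eqP -> _ _]; rewrite inE eqxx. Qed.

Lemma path_cat x y z p q : is_path e x y (x :: p) -> is_path e y z (y :: q) ->
  is_path e x z (x :: p ++ q).
Proof.
rewrite /= => /and3P [_ hp /eqP hl] /and3P [_ hq /eqP hl2].
by rewrite eqxx cat_path hp hl hq last_cat hl hl2 eqxx.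
Qed.

Definition cutb u v w : bool :=
  if excluded_middle_informative (cutnode e u v w) then true else false.

Lemma cutbP u v w : reflect (cutnode e u v w) (cutb u v w).
Proof. by rewrite /cutb; case: excluded_middle_informative => h; constructor. Qed.

Lemma cutseq_ex u v l : is_path e u v l -> cutnode_seq e u v (filter (cutb u v) l).
Proof.
move=> hl; exists l => //; split; first exact: filter_subseq.
move=> w; rewrite mem_filter; split.
  by case/andP => /cutbP.
by move=> h; rewrite (h _ hl) andbT; apply/cutbP.
Qed.

Lemma path_split u v l : is_path e u v l -> forall w, w \in l ->
  exists p q, l = u :: p ++ q /\ is_path e u w (u :: p) /\ is_path e w v (w :: q).
Proof.
case: l => [|x p] //= /and3P [/eqP -> hp /eqP hl] w.
rewrite inE => /orP [/eqP -> | wp].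
  by exists [::], p; rewrite /= eqxx hp hl eqxx.
case/splitPr: wp hp hl => p1 p2.
rewrite cat_path last_cat /= => /andP [h1 /andP [h2 h3]] hl.
exists (rcons p1 w), p2; rewrite cat_rcons; split => //.
by rewrite /= eqxx -cats1 cat_path /= h1 h2 last_cat /= eqxx h3 hl eqxx.
Qed.

End Aux.

Theorem theorem1 (T : finType) (e : rel T) (s t : T) (X : seq T) :
  st_DAG e s t -> is_sequence e X ->
  (safe e s t X <->
     exists u : T, forall l, is_path e s t l -> u \in l -> contained X l) /\
  (safe e s t X <->
     exists v : T, exists C1 C2,
       [/\ cutnode_seq e s v C1, cutnode_seq e v t C2 &
           contained X (concat_seq C1 C2)]).
Proof.
case=> _ _ _ hs ht _.
have through : forall u, exists l, is_path e s t l /\ u \in l.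
  move=> u; have [l1 h1] := conn_path (hs u); have [l2 h2] := conn_path (ht u).
  case: l1 h1 => [|x1 p1] //= h1; have /eqP ex1 := proj1 (andP h1).
  case: l2 h2 => [|x2 p2] //= h2; have /eqP ex2 := proj1 (andP h2).
  subst x1 x2.
  exists (s :: p1 ++ p2); split; first exact: path_cat h1 h2.
  move: h1 => /and3P [_ _ /eqP hl].
  have : u \in s :: p1 by rewrite -hl mem_last.
  by rewrite !inE mem_cat => /orP [->|->]; rewrite ?orbT.
have E12 : safe e s t X <->
     exists u : T, forall l, is_path e s t l -> u \in l -> contained X l.
  split.
    case=> _ hP; apply: NNPP => hn.
    have hf : forall u, exists l, is_path e s t l /\ u \in l /\ ~ contained X l.
      move=> u; apply: NNPP => hn2; apply: hn; exists u => l hl hu.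
      apply: NNPP => hc; apply: hn2; by exists l.
    pose f u := proj1_sig (constructive_indefinite_description _ (hf u)).
    have hfP u : is_path e s t (f u) /\ u \in f u /\ ~ contained X (f u).
      exact: (proj2_sig (constructive_indefinite_description _ (hf u))).
    have hPC : path_cover e s t [seq f u | u <- enum T].
      split.
        by move=> l /mapP [u _ ->]; case: (hfP u).
      move=> x; exists (f x); first by apply/mapP; exists x; rewrite ?mem_enum.
      by case: (hfP x) => _ [].
    have [l] := hP _ hPC.
    by case/mapP => u _ -> hc; case: (hfP u) => _ [_].
  case=> u hu; split.
    by have [l [hl ul]] := through u; exists l; split => //; apply: hu.
  move=> P [hP1 hP2]; have [l lP ul] := hP2 u; exists l => //.
  exact: hu (hP1 _ lP) ul.
split => //; rewrite E12; split.
  case=> u hu.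
  have [l1 h1] := conn_path (hs u); have [l2 h2] := conn_path (ht u).
  case: l2 h2 => [|x2 p2] //= h2; have /eqP ex2 := proj1 (andP h2); subst x2.
  exists u, (filter (cutb e s u) l1), (filter (cutb e u t) (u :: p2)).
  split; [exact: cutseq_ex | exact: cutseq_ex |].
  have cu : cutb e u t u by apply/cutbP => l hl; apply: path_head hl.
  rewrite /concat_seq /= cu /= => x xX.
  case: (boolP (cutb e s u x)) => [cs|ncs].
    rewrite mem_cat mem_filter cs /=.
    by case: (boolP (x \in l1)) => // /negP; move/cutbP: cs => cs; case; apply: cs.
  case: (boolP (cutb e u t x)) => [ct|nct].
    have xl : x \in u :: p2 by move/cutbP: ct => ct; apply: ct.
    rewrite mem_cat; apply/orP; right; rewrite mem_filter ct /=.
    move: xl; rewrite inE => /orP [/eqP xu|//].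
    by exfalso; move/negP: ncs; apply; apply/cutbP; rewrite xu => l hl;
      case: l hl => [|y q] //= /and3P [_ _ /eqP <-]; rewrite mem_last.
  exfalso.
  move/cutbP: ncs => ncs; move/cutbP: nct => nct.
  have [q1 [hq1 xq1]] : exists l, is_path e s u l /\ x \notin l.
    apply: NNPP => hn; apply: ncs => l hl; apply: NNPP => hx; apply: hn.
    by exists l; split => //; apply/negP.
  have [q2 [hq2 xq2]] : exists l, is_path e u t l /\ x \notin l.
    apply: NNPP => hn; apply: nct => l hl; apply: NNPP => hx; apply: hn.
    by exists l; split => //; apply/negP.
  case: q1 hq1 xq1 => [|y1 r1] // hq1 xq1; have /eqP ey1 := proj1 (andP hq1); subst y1.
  case: q2 hq2 xq2 => [|y2 r2] // hq2 xq2; have /eqP ey2 := proj1 (andP hq2); subst y2.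
  have hp := path_cat hq1 hq2.
  have : contained X (s :: r1 ++ r2).
    apply: hu => //; move: hq1 => /and3P [_ _ /eqP hl].
    have : u \in s :: r1 by rewrite -hl mem_last.
    by rewrite !inE mem_cat => /orP [->|->]; rewrite ?orbT.
  move/(_ x xX); rewrite inE mem_cat.
  move: xq1 xq2; rewrite !inE !negb_or => /andP [/negPf -> /negPf ->] /andP [_ /negPf ->] //.
case=> v [C1 [C2 [[l1 hl1 [_ hC1]] [l2 hl2 [_ hC2]] hX]]].
exists v => l hl vl x /hX; rewrite /concat_seq mem_cat => /orP [xc|xc].
  have [p [q [-> [hp _]]]] := path_split hl vl.
  have := (proj1 (hC1 x) xc) _ hp.
  by rewrite !inE mem_cat => /orP [->|->]; rewrite ?orbT.
have xc2 : x \in C2 by case: (C2) xc => //= y C; rewrite inE => ->; rewrite orbT.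
have [p [q [El [_ hq]]]] := path_split hl vl.
have := (proj1 (hC2 x) xc2) _ hq.
rewrite inE => /orP [/eqP -> //|xq].
by rewrite El inE mem_cat xq !orbT.
Qed.
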